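(* Let $s_1\ge\dots\ge s_p$ be the eigenvalues of $\widehat\Sigma$ and $v_1,\dots,v_p$ corresponding orthonormal eigenvectors. Let $\lambda>0$ satisfy $$\lambda\sum_{j=i}^p s_j\langle\beta_0,v_j\rangle^2\ge\frac{\sigma^2}{n}\sum_{j=i}^ps_j\qquad\text{for all } i=1,\dots,p.$$ Then the map $t\mapsto\mathcal{R}^{\mathrm{in}}_{\lambda,\beta_0}(\hat\beta^{\mathrm{GF}}_{\lambda,t})$ is monotonically decreasing on $[0,\infty)$.
   Context: Let $n,p\in\mathbb{N}$. Observations $(x_i,y_i)$, $i=1,\dots,n$, are i.i.d. with $x_i\in\mathbb{R}^p$, $y_i\in\mathbb{R}$, $y_i=x_i^\top\beta_0+\varepsilon_i$, $\mathbb{E}[\varepsilon_i\mid x_i]=0$, $\operatorname{Var}(\varepsilon_i\mid x_i)=\sigma^2>0$. $X\in\mathbb{R}^{n\times p}$ has rows $x_i^\top$, $y=(y_i)$; assume $\beta_0=X^+X\beta_0$. Matrix functions are defined by functional calculus. $\widehat\Sigma=\frac1nX^\top X$, $\widehat\Sigma_\lambda=\widehat\Sigma+\lambda I_p$, $y_\lambda=\frac1n\widehat\Sigma_\lambda^{-1/2}X^\top y$. Gradient flow estimator for the ridge criterion $\frac1{2n}\|y-X\beta\|^2+\frac\lambda2\|\beta\|^2$: $\hat\beta^{\mathrm{GF}}_{\lambda,t}=\widehat\Sigma_\lambda^{-1/2}(I_p-\exp(-t\widehat\Sigma_\lambda))y_\lambda$, $t\ge0$. For an estimator $\hat\beta$: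 $\mathcal{R}^{\mathrm{in}}_{\lambda,\beta_0}(\hat\beta)=\mathbb{E}[\|\widehat\Sigma_\lambda^{1/2}(\hat\beta-\beta_0)\|^2\mid X]$. *)

(* Defs.v *)
From HB Require Import structures.
From mathcomp Require Import all_boot all_order all_algebra.
From mathcomp Require Import all_classical all_reals all_analysis.
Set Implicit Arguments. Unset Strict Implicit. Unset Printing Implicit Defensive.
Import Order.TTheory GRing.Theory Num.Theory.
Local Open Scope ring_scope.

Section Defs.
Variable R : realType.

(* Moore--Penrose pseudoinverse: Xp is THE (unique) matrix satisfying the
   four Penrose equations (real matrices: adjoint = transpose). *)
Definition is_pinv m k (X : 'M[R]_(m, k)) (Xp : 'M[R]_(k, m)) : Prop :=
  [/\ X *m Xp *m X = X, Xp *m X *m Xp = Xp,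
      (X *m Xp)^T = X *m Xp & (Xp *m X)^T = Xp *m X].

Definition sigma_hat n p (X : 'M[R]_(n, p)) : 'M[R]_p := (n%:R)^-1 *: (X^T *m X).

(* Functional calculus of a symmetric matrix A = V diag(d) V^T (V orthogonal):
   f(A) := V diag(f(d_1),...,f(d_p)) V^T. *)
Definition mxfun p (V : 'M[R]_p) (d : 'I_p -> R) (f : R -> R) : 'M[R]_p :=
  V *m diag_mx (\row_j f (d j)) *m V^T.

Definition sqnorm k (u : 'cV[R]_k) : R := \sum_i u i 0 ^+ 2.

Definition dotc k (u v : 'cV[R]_k) : R := \sum_i u i 0 * v i 0.

(* Given the eigendecomposition (V, s) of \widehat\Sigma, the eigenvalues of
   \widehat\Sigma_\lambda = \widehat\Sigma + \lambda I are s_j + \lambda with the same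
   eigenvectors. *)
Definition sigl_eig p (s : 'I_p -> R) (lam : R) : 'I_p -> R := fun j => s j + lam.

Definition sigl_sqrt p (V : 'M[R]_p) s lam := mxfun V (sigl_eig s lam) (fun x => Num.sqrt x).
Definition sigl_isqrt p (V : 'M[R]_p) s lam := mxfun V (sigl_eig s lam) (fun x => (Num.sqrt x)^-1).
Definition sigl_exp p (V : 'M[R]_p) s lam (t : R) :=
  mxfun V (sigl_eig s lam) (fun x => expR (- (t * x))).

Definition y_lam n p (X : 'M[R]_(n, p)) (V : 'M[R]_p) s lam (y : 'cV[R]_n) : 'cV[R]_p :=
  (n%:R)^-1 *: (sigl_isqrt V s lam *m X^T *m y).

Definition beta_gf n p (X : 'M[R]_(n, p)) (V : 'M[R]_p) s lam (t : R) (y : 'cV[R]_n)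
  : 'cV[R]_p :=
  sigl_isqrt V s lam *m (1%:M - sigl_exp V s lam t) *m y_lam X V s lam y.

Definition risk_in d (T : measurableType d) (P : probability T R) n p
  (X : 'M[R]_(n, p)) (V : 'M[R]_p) s lam (beta0 : 'cV[R]_p)
  (eps : T -> 'cV[R]_n) (est : 'cV[R]_n -> 'cV[R]_p) : \bar R :=
  'E_P[fun w => sqnorm (sigl_sqrt V s lam *m (est (X *m beta0 + eps w) - beta0))].

End Defs.

(* Main.v *)
Require Import Defs.
From HB Require Import structures.
From mathcomp Require Import all_boot all_order all_algebra.
From mathcomp Require Import all_classical all_reals all_analysis.
From mathcomp Require Import ring lra.
Import Order.TTheory GRing.Theory Num.Theory.
Local Open Scope ring_scope.

Section Exp.
Variables (R : realType) (d : measure_display) (T : measurableType d) (P : probability T R).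

Lemma E_sum (I : Type) (r : seq I) (F : I -> T -> R) :
  (forall i, F i \in Lfun P 1) ->
  ('E_P[fun w => (\sum_(i <- r) F i w)%R] = \sum_(i <- r) 'E_P[F i])%E.
Proof.
move=> HF.
have HL : forall r : seq I, (fun w => \sum_(i <- r) F i w) \in Lfun P 1.
  elim=> [|a r' IH].
    have -> : (fun w : T => \sum_(i <- [::]) F i w) = cst 0.
      by apply/funext => w; rewrite big_nil.
    exact: Lfun_cst.
  have -> : (fun w => \sum_(i <- a :: r') F i w) = F a \+ (fun w => \sum_(i <- r') F i w).
    by apply/funext => w; rewrite big_cons.
  by rewrite rpredD.
elim: r => [|a r' IH].
  have -> : (fun w : T => \sum_(i <- [::]) F i w) = cst 0.
    by apply/funext => w; rewrite big_nil.
  by rewrite expectation_cst big_nil.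
have -> : (fun w => \sum_(i <- a :: r') F i w) = F a \+ (fun w => \sum_(i <- r') F i w).
  by apply/funext => w; rewrite big_cons.
by rewrite expectationD // IH big_cons.
Qed.


Lemma Lfun_int (f : T -> R) : P.-integrable setT (fun w => (f w)%:E) -> f \in Lfun P 1.
Proof. by move=> h; apply/Lfun1_integrable. Qed.

Lemma LfunZ' (k : R) (f : T -> R) : f \in Lfun P 1 -> (fun w => k * f w) \in Lfun P 1.
Proof.
move=> h; have -> : (fun w => k * f w) = k *: f by apply/funext.
by rewrite rpredZ.
Qed.

Lemma ExpZ (k : R) (f : T -> R) : f \in Lfun P 1 ->
  ('E_P[fun w => (k * f w)%R] = k%:E * 'E_P[f])%E.
Proof.
move=> h; have -> : (fun w => k * f w) = k \o* f.
  by apply/funext => w /=; rewrite mulrC.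
by rewrite expectationZl.
Qed.

Lemma E_quad n (eps : T -> 'cV[R]_n) (sigma K : R) (u : 'I_n -> R) (q : 'I_n -> 'I_n -> R) :
  (forall i : 'I_n, P.-integrable setT (fun w => (eps w i ord0)%:E)) ->
  (forall i j : 'I_n, P.-integrable setT (fun w => (eps w i ord0 * eps w j ord0)%:E)) ->
  (forall i : 'I_n, ('E_P[fun w => eps w i ord0] = 0)%E) ->
  (forall i j : 'I_n,
     ('E_P[fun w => (eps w i ord0 * eps w j ord0)%R] = (sigma ^+ 2 * (i == j)%:R)%:E)%E) ->
  ('E_P[fun w => (K + \sum_i u i * eps w i ord0
        + \sum_i \sum_j q i j * (eps w i ord0 * eps w j ord0))%R]
   = (K + sigma ^+ 2 * \sum_i q i i)%:E)%E.
Proof.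
move=> I1 I2 E1 E2.
have L1 : forall i, (fun w => u i * eps w i ord0) \in Lfun P 1.
  by move=> i; apply: LfunZ'; apply: Lfun_int.
have L2 : forall i j, (fun w => q i j * (eps w i ord0 * eps w j ord0)) \in Lfun P 1.
  by move=> i j; apply: LfunZ'; apply: Lfun_int.
have S1 : (fun w => \sum_i u i * eps w i ord0) \in Lfun P 1.
  have -> : (fun w => \sum_i u i * eps w i ord0) = \sum_i (fun w => u i * eps w i ord0).
    by apply/funext => w; rewrite fct_sumE.
  by rewrite rpred_sum.
have S2' : forall i, (fun w => \sum_j q i j * (eps w i ord0 * eps w j ord0)) \in Lfun P 1.
  move=> i.
  have -> : (fun w => \sum_j q i j * (eps w i ord0 * eps w j ord0))
     = \sum_j (fun w => q i j * (eps w i ord0 * eps w j ord0)).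
    by apply/funext => w; rewrite fct_sumE.
  by rewrite rpred_sum.
have S2 : (fun w => \sum_i \sum_j q i j * (eps w i ord0 * eps w j ord0)) \in Lfun P 1.
  have -> : (fun w => \sum_i \sum_j q i j * (eps w i ord0 * eps w j ord0))
     = \sum_i (fun w => \sum_j q i j * (eps w i ord0 * eps w j ord0)).
    by apply/funext => w; rewrite fct_sumE.
  by rewrite rpred_sum.
have -> : (fun w => (K + \sum_i u i * eps w i ord0
        + \sum_i \sum_j q i j * (eps w i ord0 * eps w j ord0))%R)
   = (cst K \+ (fun w => \sum_i u i * eps w i ord0))
       \+ (fun w => \sum_i \sum_j q i j * (eps w i ord0 * eps w j ord0)) by [].
rewrite expectationD ?rpredD ?Lfun_cst //.
rewrite expectationD ?Lfun_cst // expectation_cst.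
rewrite E_sum // E_sum //.
have -> : (\sum_i 'E_P[fun w => (u i * eps w i ord0)%R] = 0)%E.
  apply: big1 => i _.
  by rewrite ExpZ ?Lfun_int // E1 mule0.
have -> : (\sum_i 'E_P[fun w => (\sum_j q i j * (eps w i ord0 * eps w j ord0))%R]
   = \sum_i (q i i * sigma ^+ 2)%:E)%E.
  apply: eq_bigr => i _.
  rewrite E_sum //.
  rewrite (bigD1 i) //= big1 ?adde0.
    by rewrite ExpZ ?Lfun_int // E2 eqxx mulr1.
  move=> j /negPf ji.
  by rewrite ExpZ ?Lfun_int // E2 eq_sym ji mulr0 mule0.
rewrite adde0 sumEFin -EFinD; congr (_ + _)%:E.
by rewrite mulr_sumr; apply: eq_bigr => i _; rewrite mulrC.
Qed.

End Exp.

Section Rl.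
Variable R : realType.

Lemma abel_nat (N : nat) (c w : nat -> R) :
  (forall i, (i.+1 < N)%N -> c i <= c i.+1) -> 0 <= c 0%N ->
  (forall i, (i <= N)%N -> \sum_(i <= j < N) w j <= 0) ->
  \sum_(0 <= j < N) c j * w j <= 0.
Proof.
move=> cmon c0 W.
have claim : forall m k, (k + m = N)%N ->
    \sum_(k <= j < N) c j * w j <= c k * \sum_(k <= j < N) w j.
  elim=> [|m IH] k hk.
    by rewrite !big_geq ?mulr0 // -hk addn0.
  have kN : (k < N)%N by rewrite -hk addnS ltnS leq_addr.
  rewrite big_ltn // [\sum_(k <= j < N) w j]big_ltn // mulrDr lerD2l.
  apply: (le_trans (IH k.+1 _)); first by rewrite addSnnS.
  case: (ltnP k.+1 N) => hkN.
    by apply: ler_wnM2r; [apply: W | apply: cmon].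
  by rewrite big_geq // !mulr0.
apply: (le_trans (claim N 0%N (add0n N))).
by rewrite mulr_ge0_le0 // W.
Qed.

Lemma phi_mono (x y : R) : 0 <= x -> x <= y ->
  x * (1 - expR (- y)) <= y * (1 - expR (- x)).
Proof.
move=> x0 xy.
set z := y - x.
have z0 : 0 <= z by rewrite subr_ge0.
have ey : expR (- y) = expR (- x) * expR (- z) by rewrite -expRD /z; congr expR; ring.
rewrite ey.
have E1 := expR_gt0 (- x).
have E2 := expR_gt0 (- z).
have h1 : 1 - z <= expR (- z) by have := expR_ge1Dx (- z); lra.
have h2 : expR (- x) * (1 + x) <= 1.
  have := expR_ge1Dx x => h.
  have : expR (- x) * (1 + x) <= expR (- x) * expR x by rewrite ler_pM2l.
  by rewrite -expRD addNr expR0.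
have hy : y = x + z by rewrite /z; ring.
rewrite hy.
have h3 : 0 <= x * expR (- x) by rewrite mulr_ge0 // ltW.
have h4 : x * expR (- x) * (1 - expR (- z)) <= x * expR (- x) * z.
  by apply: ler_wpM2l => //; lra.
have h5 : z * (x * expR (- x)) <= z * (1 - expR (- x)).
  by apply: ler_wpM2l => //; lra.
rewrite -subr_ge0.
have -> : (x + z) * (1 - expR (- x)) - x * (1 - expR (- x) * expR (- z))
  = z * (1 - expR (- x)) - x * expR (- x) * (1 - expR (- z)) by ring.
rewrite subr_ge0; apply: (le_trans h4); rewrite mulrC; exact: h5.
Qed.

Lemma c_mono (t1 t2 a a' : R) : 0 <= t1 -> t1 <= t2 -> 0 < a' -> a' <= a ->
  (expR (- (t1 * a)) - expR (- (t2 * a))) / a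
    <= (expR (- (t1 * a')) - expR (- (t2 * a'))) / a'.
Proof.
move=> t10 t12 a'0 aa'.
have a0 : 0 < a by apply: lt_le_trans aa'.
set u := t2 - t1.
have u0 : 0 <= u by rewrite subr_ge0.
have e2 : forall b, expR (- (t2 * b)) = expR (- (t1 * b)) * expR (- (u * b)).
  by move=> b; rewrite -expRD /u; congr expR; ring.
rewrite !e2.
have HH : forall b, (expR (- (t1 * b)) - expR (- (t1 * b)) * expR (- (u * b))) / b
   = expR (- (t1 * b)) * ((1 - expR (- (u * b))) / b).
  by move=> b; rewrite mulrA mulrBr mulr1.
rewrite !HH.
apply: ler_pM.
- exact: expR_ge0.
- apply: divr_ge0; last exact: ltW.
  by rewrite subr_ge0 expR_le1 oppr_le0 mulr_ge0 // ltW.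
- by rewrite ler_expR lerN2 ler_wpM2l.
rewrite ler_pdivrMr // mulrAC ler_pdivlMr //.
have [->|uneq] := eqVneq u 0.
  by rewrite !mul0r oppr0 expR0 subrr !mul0r.
have up : 0 < u by rewrite lt_def uneq u0.
have h := @phi_mono (u * a') (u * a) (mulr_ge0 u0 (ltW a'0)) (ler_wpM2l u0 aa').
rewrite -(ler_pM2l up).
move: h.
have -> : u * ((1 - expR (- (u * a))) * a') = u * a' * (1 - expR (- (u * a))) by ring.
by have -> : u * ((1 - expR (- (u * a'))) * a) = u * a * (1 - expR (- (u * a'))) by ring.
Qed.

Definition hterm (lam k t sj bj : R) :=
  ((lam + expR (- (t * (sj + lam))) * sj) ^+ 2 * bj ^+ 2
    + k * (1 - expR (- (t * (sj + lam)))) ^+ 2 * sj) / (sj + lam).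

Lemma hterm_le (lam k t1 t2 sj bj : R) : 0 < lam -> 0 <= k -> 0 <= sj ->
  0 <= t1 -> t1 <= t2 ->
  hterm lam k t2 sj bj - hterm lam k t1 sj bj <=
  2 * ((expR (- (t1 * (sj + lam))) - expR (- (t2 * (sj + lam)))) / (sj + lam)
       * (sj * (k - lam * bj ^+ 2))).
Proof.
move=> l0 k0 s0 t10 t12.
have a0 : 0 < sj + lam by apply: ltr_wpDl.
set E := expR (- (t1 * (sj + lam))).
set E' := expR (- (t2 * (sj + lam))).
have EE : E' <= E by rewrite /E /E' ler_expR lerN2 ler_wpM2r // ltW.
have E0 : 0 <= E' by apply: expR_ge0.
rewrite /hterm -/E -/E' -subr_ge0.
have -> : 2 * ((E - E') / (sj + lam) * (sj * (k - lam * bj ^+ 2))) -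
  (((lam + E' * sj) ^+ 2 * bj ^+ 2 + k * (1 - E') ^+ 2 * sj) / (sj + lam) -
   ((lam + E * sj) ^+ 2 * bj ^+ 2 + k * (1 - E) ^+ 2 * sj) / (sj + lam))
  = (E - E') * sj * (E + E') * (bj ^+ 2 * sj + k) / (sj + lam).
  by field; rewrite gt_eqF.
apply: divr_ge0; last exact: ltW.
apply: mulr_ge0; last by rewrite addr_ge0 // mulr_ge0 // sqr_ge0.
apply: mulr_ge0; last by rewrite addr_ge0 // (le_trans E0 EE).
by rewrite mulr_ge0 // subr_ge0.
Qed.

Lemma main_real p (s b : 'I_p -> R) (lam k t1 t2 : R) :
  0 < lam -> 0 <= k -> (forall j, 0 <= s j) ->
  (forall i j : 'I_p, (i <= j)%N -> s j <= s i) ->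
  (forall i : 'I_p, k * (\sum_(j : 'I_p | (i <= j)%N) s j)
       <= lam * (\sum_(j : 'I_p | (i <= j)%N) s j * b j ^+ 2)) ->
  0 <= t1 -> t1 <= t2 ->
  \sum_j hterm lam k t2 (s j) (b j) <= \sum_j hterm lam k t1 (s j) (b j).
Proof.
case: p s b => [|p'] s b.
  by move=> *; rewrite !big_ord0.
move=> l0 k0 s0 smon hyp t10 t12.
set a := fun j => s j + lam.
set c := fun j => (expR (- (t1 * a j)) - expR (- (t2 * a j))) / a j.
set w := fun j => s j * (k - lam * b j ^+ 2).
have a0 : forall j, 0 < a j by move=> j; apply: ltr_wpDl.
have key : \sum_j c j * w j <= 0.
  have -> : \sum_j c j * w j = \sum_(0 <= j < p'.+1) c (inord j) * w (inord j).
    by rewrite big_mkord; apply: eq_bigr => j _; rewrite inord_val.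
  apply: abel_nat.
  - move=> i ip.
    apply: c_mono => //.
    rewrite /a lerD2r; apply: smon.
    by rewrite !inordK // ltnW.
  - apply: divr_ge0; last exact: ltW.
    by rewrite subr_ge0 ler_expR lerN2 ler_wpM2r // ltW.
  - move=> i ip.
    case: (ltnP i p'.+1) => hi; last first.
      by rewrite big_geq.
    rewrite big_geq_mkord.
    have -> : \sum_(j < p'.+1 | true && (i <= j)%N) w (inord j)
        = \sum_(j < p'.+1 | (@inord p' i <= j)%N) w j.
      by apply: eq_big => j; rewrite ?inordK //= ?inord_val.
    have := hyp (inord i).
    rewrite /w.
    have -> : \sum_(j < p'.+1 | (@inord p' i <= j)%N) s j * (k - lam * b j ^+ 2)
      = k * \sum_(j < p'.+1 | (@inord p' i <= j)%N) s j
        - lam * \sum_(j < p'.+1 | (@inord p' i <= j)%N) s j * b j ^+ 2.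
      by rewrite !mulr_sumr -sumrB; apply: eq_bigr => j _; ring.
    by rewrite subr_le0.
rewrite -subr_le0 -sumrB.
apply: (@le_trans _ _ (\sum_j 2 * (c j * w j))).
  by apply: ler_sum => j _; apply: hterm_le.
by rewrite -mulr_sumr pmulr_rle0.
Qed.

End Rl.

Section Mx.
Variable R : realType.
Variable p : nat.
Implicit Types V : 'M[R]_p.

Lemma diag_entry m (f : 'I_p -> R) (M : 'M[R]_(p, m)) j k :
  (diag_mx (\row_i f i) *m M) j k = f j * M j k.
Proof. by rewrite mul_diag_mx !mxE. Qed.

Lemma Vt_mxfun V d f : V^T *m V = 1%:M ->
  V^T *m mxfun V d f = diag_mx (\row_j f (d j)) *m V^T.
Proof. by move=> HV; rewrite /mxfun !mulmxA HV mul1mx. Qed.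

Lemma sqnormE k (u : 'cV[R]_k) : sqnorm u = (u^T *m u) 0 0.
Proof. by rewrite /sqnorm mxE; apply: eq_bigr => i _; rewrite mxE expr2. Qed.

Lemma sqnorm_orth V (y : 'cV[R]_p) : V^T *m V = 1%:M -> sqnorm (V *m y) = sqnorm y.
Proof.
by move=> HV; rewrite !sqnormE trmx_mul mulmxA -(mulmxA y^T) HV mulmx1.
Qed.

Lemma sigma_eig n (X : 'M[R]_(n, p)) V (s : 'I_p -> R) :
  (forall j : 'I_p, sigma_hat X *m col j V = s j *: col j V) ->
  sigma_hat X *m V = V *m diag_mx (\row_j s j).
Proof.
move=> He; apply/matrixP => i j.
have e1 : (sigma_hat X *m V) i j = (sigma_hat X *m col j V) i 0.
  by rewrite colE mulmxA -colE [RHS]mxE.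
rewrite e1 He mul_mx_diag !mxE mulrC.
by [].
Qed.

Lemma Vt_sigma n (X : 'M[R]_(n, p)) V (s : 'I_p -> R) :
  (forall j : 'I_p, sigma_hat X *m col j V = s j *: col j V) ->
  V^T *m V = 1%:M ->
  V^T *m sigma_hat X = diag_mx (\row_j s j) *m V^T.
Proof.
move=> He HV.
have HV' : V *m V^T = 1%:M by apply: mulmx1C.
rewrite -[sigma_hat X]mulmx1 -HV' mulmxA (mulmxA _ V) -(mulmxA V^T) (@sigma_eig n X V s He).
by rewrite mulmxA HV mul1mx.
Qed.

Lemma mxfunM V d f g : V^T *m V = 1%:M ->
  mxfun V d f *m mxfun V d g = mxfun V d (fun x => f x * g x).
Proof.
move=> HV.
rewrite {1}/mxfun -mulmxA Vt_mxfun // mulmxA -(mulmxA V) mulmx_diag /mxfun.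
by congr (V *m diag_mx _ *m V^T); apply/rowP => j; rewrite !mxE.
Qed.

Lemma one_sub_mxfun V d f : V^T *m V = 1%:M ->
  1%:M - mxfun V d f = mxfun V d (fun x => 1 - f x).
Proof.
move=> HV.
have HV' : V *m V^T = 1%:M by apply: mulmx1C.
rewrite /mxfun.
have -> : \row_j (1 - f (d j)) = const_mx 1 - \row_j f (d j) :> 'rV[R]_p.
  by apply/rowP => j; rewrite !mxE.
by rewrite raddfB /= diag_const_mx mulmxBr mulmxBl mulmx1 HV'.
Qed.

Lemma mxB (A B : 'cV[R]_p) j : (A - B) j 0 = A j 0 - B j 0.
Proof. by rewrite !mxE. Qed.
Lemma mxD (A B : 'cV[R]_p) j : (A + B) j 0 = A j 0 + B j 0.
Proof. by rewrite !mxE. Qed.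
Lemma mxZ (a : R) (A : 'cV[R]_p) j : (a *: A) j 0 = a * A j 0.
Proof. by rewrite !mxE. Qed.

Lemma Vt_mxfun_app k V d f (Z : 'M[R]_(p, k)) : V^T *m V = 1%:M ->
  V^T *m (mxfun V d f *m Z) = diag_mx (\row_j f (d j)) *m (V^T *m Z).
Proof. by move=> HV; rewrite mulmxA Vt_mxfun // -mulmxA. Qed.

Lemma Vt_beta_gf n (X : 'M[R]_(n, p)) V s lam t (y : 'cV[R]_n) : V^T *m V = 1%:M ->
  V^T *m beta_gf X V s lam t y =
  n%:R^-1 *: (diag_mx (\row_j ((Num.sqrt (s j + lam))^-1 * (1 - expR (- (t * (s j + lam))))
      * (Num.sqrt (s j + lam))^-1)) *m (V^T *m X^T *m y)).
Proof.
move=> HV.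
rewrite /beta_gf /y_lam /sigl_isqrt /sigl_exp one_sub_mxfun // mxfunM //.
rewrite -scalemxAr -scalemxAr; congr (_ *: _).
rewrite Vt_mxfun_app // -mulmxA Vt_mxfun_app // mulmxA mulmx_diag.
congr (diag_mx _ *m _); last by rewrite mulmxA.
by apply/matrixP => i j; rewrite !mxE.
Qed.

Definition Gf (t a : R) := (Num.sqrt a)^-1 * (1 - expR (- (t * a))) * (Num.sqrt a)^-1.

Lemma integrand_eq n (X : 'M[R]_(n, p)) V s lam t (beta0 : 'cV[R]_p) (e : 'cV[R]_n) :
  V^T *m V = 1%:M ->
  (forall j : 'I_p, sigma_hat X *m col j V = s j *: col j V) ->
  (forall j, 0 <= s j + lam) ->
  sqnorm (sigl_sqrt V s lam *m (beta_gf X V s lam t (X *m beta0 + e) - beta0))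
  = \sum_j (s j + lam) * (Gf t (s j + lam) * (s j * (V^T *m beta0) j 0
        + \sum_i (n%:R^-1 * (V^T *m X^T) j i) * e i 0) - (V^T *m beta0) j 0) ^+ 2.
Proof.
move=> HV He a0.
rewrite /sigl_sqrt /mxfun -2!mulmxA sqnorm_orth //.
rewrite /sqnorm; apply: eq_bigr => j _; rewrite diag_entry exprMn sqr_sqrtr; last exact: a0.
congr (_ * _ ^+ 2).
rewrite mulmxBr mxB Vt_beta_gf // mxZ diag_entry mulmxDr mxD.
have hA : n%:R^-1 * (V^T *m X^T *m (X *m beta0)) j 0 = s j * (V^T *m beta0) j 0.
  rewrite -mxZ scalemxAl scalemxAr.
  have -> : V^T *m (n%:R^-1 *: X^T) *m (X *m beta0) = V^T *m sigma_hat X *m beta0.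
    by rewrite /sigma_hat scalemxAl !mulmxA.
  by rewrite (@Vt_sigma n X V s He HV) -mulmxA diag_entry.
have hB : n%:R^-1 * (V^T *m X^T *m e) j 0
    = \sum_i (n%:R^-1 * (V^T *m X^T) j i) * e i 0.
  by rewrite mxE mulr_sumr; apply: eq_bigr => i _; rewrite mulrA.
rewrite /Gf -hA -hB; ring.
Qed.

End Mx.

Section Final.
Variable R : realType.

Lemma expand_sq p n (a al ga : 'I_p -> R) (c : 'I_p -> 'I_n -> R) (x : 'I_n -> R) :
  \sum_j a j * (al j + ga j * \sum_i c j i * x i) ^+ 2
  = \sum_j a j * al j ^+ 2
    + \sum_i (\sum_j 2 * a j * al j * ga j * c j i) * x i
    + \sum_i \sum_k (\sum_j a j * ga j ^+ 2 * c j i * c j k) * (x i * x k).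
Proof.
have e1 : \sum_i (\sum_j 2 * a j * al j * ga j * c j i) * x i
    = \sum_j \sum_i 2 * a j * al j * ga j * c j i * x i.
  rewrite exchange_big; apply: eq_bigr => i _; by rewrite mulr_suml.
have e2 : \sum_i \sum_k (\sum_j a j * ga j ^+ 2 * c j i * c j k) * (x i * x k)
    = \sum_j \sum_i \sum_k a j * ga j ^+ 2 * c j i * c j k * (x i * x k).
  rewrite [RHS]exchange_big /=; apply: eq_bigr => i _.
  rewrite [RHS]exchange_big /=; apply: eq_bigr => k _.
  by rewrite mulr_suml.
rewrite e1 e2 -!big_split /=; apply: eq_bigr => j _.
set S := \sum_i c j i * x i.
have h1 : \sum_i 2 * a j * al j * ga j * c j i * x i = 2 * a j * al j * ga j * S.
  by rewrite /S mulr_sumr; apply: eq_bigr => i _; rewrite !mulrA.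
have h2 : \sum_i \sum_k a j * ga j ^+ 2 * c j i * c j k * (x i * x k)
    = a j * ga j ^+ 2 * S ^+ 2.
  have SS : S ^+ 2 = \sum_i \sum_k c j i * c j k * (x i * x k).
    rewrite expr2 /S big_distrl /=; apply: eq_bigr => i _.
    rewrite big_distrr /=; apply: eq_bigr => k _; ring.
  rewrite SS mulr_sumr; apply: eq_bigr => i _.
  rewrite mulr_sumr; apply: eq_bigr => k _; ring.
rewrite h1 h2; ring.
Qed.

Lemma s_formula n p (X : 'M[R]_(n, p)) (V : 'M[R]_p) (s : 'I_p -> R) (j : 'I_p) :
  V^T *m V = 1%:M ->
  (forall j : 'I_p, sigma_hat X *m col j V = s j *: col j V) ->
  s j = n%:R^-1 * \sum_i (V^T *m X^T) j i ^+ 2.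
Proof.
move=> HV He.
have H0 : (V^T *m sigma_hat X *m V) j j = s j.
  by rewrite (@Vt_sigma R p n X V s He HV) -mulmxA HV mulmx1 mxE eqxx mulr1n mxE.
have H1 : V^T *m sigma_hat X *m V = n%:R^-1 *: ((V^T *m X^T) *m (V^T *m X^T)^T).
  by rewrite /sigma_hat -scalemxAr -scalemxAl trmx_mul !trmxK !mulmxA.
rewrite -H0 H1 mxE [X in _ * X]mxE; congr (_ * _).
by apply: eq_bigr => i _; rewrite [X in _ * X]mxE expr2.
Qed.

Lemma b_formula p (V : 'M[R]_p) (beta0 : 'cV[R]_p) (j : 'I_p) :
  (V^T *m beta0) j 0 = dotc beta0 (col j V).
Proof. by rewrite mxE /dotc; apply: eq_bigr => i _; rewrite !mxE mulrC. Qed.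

End Final.

Theorem proposition3p11 (R : realType) (n p : nat) (X : 'M[R]_(n, p))
  (beta0 : 'cV[R]_p) (sigma lam : R)
  (d : measure_display) (T : measurableType d) (P : probability T R)
  (eps : T -> 'cV[R]_n)
  (s : 'I_p -> R) (V : 'M[R]_p) :
  (0 < n)%N ->
  0 < sigma ->
  (* noise, conditionally on X: mean zero, covariance sigma^2 I_n *)
  (forall i : 'I_n, P.-integrable setT (fun w => (eps w i ord0)%:E)) ->
  (forall i j : 'I_n, P.-integrable setT (fun w => (eps w i ord0 * eps w j ord0)%:E)) ->
  (forall i : 'I_n, ('E_P[fun w => eps w i ord0] = 0)%E) ->
  (forall i j : 'I_n,
     ('E_P[fun w => (eps w i ord0 * eps w j ord0)%R] = (sigma ^+ 2 * (i == j)%:R)%:E)%E) ->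
  (* beta0 = X^+ X beta0 *)
  (exists Xp : 'M[R]_(p, n), is_pinv X Xp /\ beta0 = Xp *m X *m beta0) ->
  (* s_1 >= ... >= s_p eigenvalues of \widehat\Sigma, v_j = col j V orthonormal eigenvectors *)
  (forall i j : 'I_p, (i <= j)%N -> s j <= s i) ->
  V^T *m V = 1%:M ->
  (forall j : 'I_p, sigma_hat X *m col j V = s j *: col j V) ->
  0 < lam ->
  (forall i : 'I_p,
     lam * (\sum_(j : 'I_p | (i <= j)%N) s j * dotc beta0 (col j V) ^+ 2)
       >= sigma ^+ 2 / n%:R * (\sum_(j : 'I_p | (i <= j)%N) s j)) ->
  forall t1 t2 : R, 0 <= t1 -> t1 <= t2 ->
    (risk_in P X V s lam beta0 eps (beta_gf X V s lam t2)
       <= risk_in P X V s lam beta0 eps (beta_gf X V s lam t1))%E.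
Proof.
move=> n0 sig0 I1 I2 E1 E2 _ smon HV He lam0 hyp t1 t2 t10 t12.
have s0 : forall j, 0 <= s j.
  move=> j; rewrite (@s_formula R n p X V s j HV He) mulr_ge0 // ?invr_ge0 ?ler0n //.
  by apply: sumr_ge0 => i _; exact: sqr_ge0.
have a0 : forall j, 0 <= s j + lam by move=> j; rewrite addr_ge0 // ltW.
have riskE : forall t, risk_in P X V s lam beta0 eps (beta_gf X V s lam t)
   = (\sum_j @hterm R lam (sigma ^+ 2 / n%:R) t (s j) (dotc beta0 (col j V)))%:E.
  move=> t; rewrite /risk_in.
  pose a := fun j => s j + lam.
  pose G := fun j => @Gf R t (s j + lam).
  pose c := fun (j : 'I_p) (i : 'I_n) => n%:R^-1 * (V^T *m X^T) j i.
  pose bb := fun j => (V^T *m beta0) j 0.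
  pose al := fun j => G j * s j * bb j - bb j.
  pose U := fun i => \sum_j 2 * a j * al j * G j * c j i.
  pose Q := fun i k => \sum_j a j * G j ^+ 2 * c j i * c j k.
  pose K := \sum_j a j * al j ^+ 2.
  have -> : (fun w => sqnorm (sigl_sqrt V s lam *m
       (beta_gf X V s lam t (X *m beta0 + eps w) - beta0)))
     = (fun w => K + \sum_i U i * eps w i ord0
          + \sum_i \sum_k Q i k * (eps w i ord0 * eps w k ord0)).
    apply/funext => w; rewrite integrand_eq //.
    rewrite -(@expand_sq R p n a al G c (fun i => eps w i ord0)).
    by apply: eq_bigr => j _; congr (_ * _ ^+ 2); rewrite /al /bb /G /c; ring.
  rewrite (@E_quad R d T P n eps sigma K U Q I1 I2 E1 E2); congr (_)%:E.
  rewrite /K /Q exchange_big /= mulr_sumr -big_split /=.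
  apply eq_bigr => j _.
  have cs : \sum_i a j * G j ^+ 2 * c j i * c j i = a j * G j ^+ 2 * (n%:R^-1 * s j).
    rewrite (@s_formula R n p X V s j HV He) mulr_sumr mulr_sumr.
    rewrite mulr_sumr; apply eq_bigr => i _; rewrite /c; ring.
  rewrite cs /al /bb b_formula /G /a /hterm.
  set q := Num.sqrt (s j + lam).
  have q2 : q ^+ 2 = s j + lam by rewrite sqr_sqrtr.
  have apos : s j + lam != 0 by rewrite gt_eqF // ltr_wpDl.
  have -> : @Gf R t (s j + lam) = (1 - expR (- (t * (s j + lam)))) * (q ^+ 2)^-1.
    by rewrite /Gf -/q -exprVn; ring.
  rewrite q2; field.
  by rewrite apos pnatr_eq0 -lt0n n0.
rewrite !riskE lee_fin.
apply: main_real => //.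
- by rewrite divr_ge0 // ?sqr_ge0 ?ler0n.
Qed.
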